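(* Let $\Lambda$ be a normal two-sorted term-modal logic and let $\Gamma$ be a $\Lambda$-consistent set of formulas of $\mathcal L$. Then there exists a $\Lambda$-consistent set $\Gamma_+$ of formulas of $\mathcal L^+$ with the $\forall$-property such that $\Gamma\subseteq\Gamma_+$.
   Context: Fix a finite nonempty set of agents $\mathcal A$ with $n=|\mathcal A|$ and two sorts $agt$, $obj$. The language $\mathcal L$ has countably infinite sets $VAR_{agt}$, $VAR_{obj}$ of variables, countable (possibly empty) sets of sorted constants, sorted function symbols (arity $\alpha\in\{agt,obj\}^{k+1}$) and sorted relation symbols (arity $\beta\in\{agt,obj\}^k$, $k\ge1$), $=$, $\neg,\to,\forall$, and operators $K_t$ for agent-sorted terms $t$; formulas: $t_1=t_2$, sort-correct $P(t_1,\dots,t_k)$, $\neg\varphi$, $\varphi\to\psi$, $\forall x\varphi$, $K_t\varphi$. Free variables as usual, those of $K_t\varphi$ being those of $t$ and $\varphi$; $\varphi(y/x)$ is substitution of $y$ for free occurrences of $x$. $\mathcal L^+$ is the language obtained from $\mathcal L$ by adding countably infinitely many new variables of each sort. A normal two-sorted term-modal logic $\Lambda$ (over $\mathcal L^+$) is a set of formulas containing: all substitution instances of valid formulas of propositional modal logic; ($\forall$) $\forall x\varphi\to\varphi(y/x)$ for $y$ a variable free in $\varphi$; (Id) $t=t$; (MSD) $x\neq y$ for $x$ agent-sorted, $y$ object-sorted variables; (PS) $(x=y)\to(\varphi(x)\to\varphi(y))$; ($\exists$Id) $(c=c)\to\exists x(x=c)$ for constants $c$; (N) $\exists x_1\cdots\exists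 x_n(x_1\neq x_2\wedge\dots\wedge x_{n-1}\neq x_n\wedge\forall y(y=x_1\vee\dots\vee y=x_n))$ for agent variables; (K) $K_t(\varphi\to\psi)\to(K_t\varphi\to K_t\psi)$; (BF) $\forall xK_t\varphi\to K_t\forall x\varphi$, $x\neq t$; (KNI) $(x\neq y)\to K_t(x\neq y)$; and closed under modus ponens, (KG) from $\varphi$ infer $K_t\varphi$, and (Gen) from $\varphi\to\psi$ infer $\varphi\to\forall x\psi$ when $x$ is not free in $\varphi$. $\Gamma\vdash_\Lambda\varphi$ iff $\bigwedge\Gamma_0\to\varphi\in\Lambda$ for some finite $\Gamma_0\subseteq\Gamma$; $\Gamma$ is $\Lambda$-consistent iff $\Gamma\not\vdash_\Lambda\varphi\wedge\neg\varphi$ for every formula $\varphi$. A set $\Gamma$ has the $\forall$-property if for every formula $\varphi$ and every variable $x$ there is a variable $y$ with $(\varphi(y/x)\to\forall x\varphi)\in\Gamma$. *)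

(* Defs.v *)
From HB Require Import structures.
From mathcomp Require Import all_boot.
From Stdlib Require List.

Set Implicit Arguments.
Unset Strict Implicit.
Unset Printing Implicit Defensive.

Inductive srt := agt | obj.

Definition srt_eqb (a b : srt) : bool :=
  match a, b with agt, agt | obj, obj => true | _, _ => false end.
Lemma srt_eqP : Equality.axiom srt_eqb.
Proof. by case; case; constructor. Qed.
HB.instance Definition _ := hasDecEq.Build srt srt_eqP.

Record signature := Signature {
  Cst : countType;
  Fun : countType;
  Rl  : countType;
  csort : Cst -> srt;
  fsig  : Fun -> seq srt * srt;        (* (argument sorts, result sort), arity k+1, k >= 0 *)
  rsig  : Rl -> seq srt;
  rsig_pos : forall r, 0 < size (rsig r)
}.

(* Variables with fresh = false are the
   (countably infinitely many per sort) variables of L; those with fresh = true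
   are the countably infinitely many new variables of each sort added in L+. *)
Definition var := (srt * nat * bool)%type.
Definition vsort (x : var) : srt := x.1.1.
Definition vfresh (x : var) : bool := x.2.

Section Syntax.
Variable S : signature.

Inductive term :=
  | TVar of var
  | TConst of Cst S
  | TApp of Fun S & seq term.

Fixpoint tsort (t : term) : option srt :=
  match t with
  | TVar x => Some (vsort x)
  | TConst c => Some (csort c)
  | TApp f ts =>
      if map tsort ts == map Some (fsig f).1 then Some (fsig f).2 else None
  end.

Fixpoint tvars (t : term) : seq var :=
  match t with
  | TVar x => [:: x]
  | TConst _ => [::]
  | TApp _ ts => flatten (map tvars ts)
  end.

Fixpoint tsubst (y x : var) (t : term) : term :=
  match t with
  | TVar z => if z == x then TVar y else TVar z
  | TConst c => TConst c
  | TApp f ts => TApp f (map (tsubst y x) ts)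
  end.

Inductive form :=
  | Eq of term & term
  | Rel of Rl S & seq term
  | Neg of form
  | Imp of form & form
  | All of var & form
  | Know of term & form.

Definition And (a b : form) := Neg (Imp a (Neg b)).
Definition Or (a b : form) := Imp (Neg a) b.
Definition Ex (x : var) (a : form) := Neg (All x (Neg a)).

Fixpoint bigAnd (a : form) (l : seq form) : form :=
  match l with [::] => a | b :: l' => And a (bigAnd b l') end.
Fixpoint bigOr (a : form) (l : seq form) : form :=
  match l with [::] => a | b :: l' => Or a (bigOr b l') end.

Fixpoint wf (p : form) : bool :=
  match p with
  | Eq t1 t2 => (tsort t1 != None) && (tsort t2 != None)
  | Rel r ts => map tsort ts == map Some (rsig r)
  | Neg a => wf a
  | Imp a b => wf a && wf b
  | All _ a => wf a
  | Know t a => (tsort t == Some agt) && wf a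
  end.

Fixpoint vars (p : form) : seq var :=
  match p with
  | Eq t1 t2 => tvars t1 ++ tvars t2
  | Rel _ ts => flatten (map tvars ts)
  | Neg a => vars a
  | Imp a b => vars a ++ vars b
  | All x a => x :: vars a
  | Know t a => tvars t ++ vars a
  end.

Definition inL (p : form) : bool := all (fun x => ~~ vfresh x) (vars p).

Fixpoint free (x : var) (p : form) : bool :=
  match p with
  | Eq t1 t2 => (x \in tvars t1) || (x \in tvars t2)
  | Rel _ ts => has (fun t => x \in tvars t) ts
  | Neg a => free x a
  | Imp a b => free x a || free x b
  | All z a => (z != x) && free x a
  | Know t a => (x \in tvars t) || free x a
  end.

Fixpoint subst (y x : var) (p : form) : form :=
  match p with
  | Eq t1 t2 => Eq (tsubst y x t1) (tsubst y x t2)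
  | Rel r ts => Rel r (map (tsubst y x) ts)
  | Neg a => Neg (subst y x a)
  | Imp a b => Imp (subst y x a) (subst y x b)
  | All z a => if z == x then All z a else All z (subst y x a)
  | Know t a => Know (tsubst y x t) (subst y x a)
  end.

(* y is free for x in p (no free occurrence of x lies in the scope of a
   quantifier binding y) *)
Fixpoint freefor (y x : var) (p : form) : bool :=
  match p with
  | Eq _ _ | Rel _ _ => true
  | Neg a => freefor y x a
  | Imp a b => freefor y x a && freefor y x b
  | All z a => (z == x) || ((~~ free x a || (z != y)) && freefor y x a)
  | Know _ a => freefor y x a
  end.

(* propositional (truth-functional) evaluation, treating every formula whose
   main connective is not neg / imp as a propositional atom *)
Fixpoint teval (v : form -> bool) (p : form) : bool :=
  match p with
  | Neg a => ~~ teval v a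
  | Imp a b => teval v a ==> teval v b
  | _ => v p
  end.
Definition taut (p : form) : Prop := forall v, teval v p.

Fixpoint distinct_forms (l : seq var) : seq form :=
  match l with
  | [::] => [::]
  | x :: l' => [seq Neg (Eq (TVar x) (TVar z)) | z <- l'] ++ distinct_forms l'
  end.

Definition N_form (xs : seq var) (y : var) : form :=
  foldr Ex
    (let last := All y (match [seq Eq (TVar y) (TVar x) | x <- xs] with
                        | [::] => Neg (Eq (TVar y) (TVar y))  (* unused: xs nonempty *)
                        | a :: l => bigOr a l end) in
     match distinct_forms xs with
     | [::] => last
     | a :: l => bigAnd a (rcons l last)
     end) xs.

(* normal two-sorted term-modal logic over L+ with n = #|A| agents *)
Definition normal_tml (A : finType) (Lam : form -> Prop) : Prop :=
  (forall p, Lam p -> wf p) /\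
  (* substitution instances of propositional (modal) validities *)
  (forall p, wf p -> taut p -> Lam p) /\
  (forall x y p, vsort y = vsort x -> freefor y x p -> wf p ->
     Lam (Imp (All x p) (subst y x p))) /\
  (forall t, tsort t != None -> Lam (Eq t t)) /\
  (forall x y, vsort x = agt -> vsort y = obj -> Lam (Neg (Eq (TVar x) (TVar y)))) /\
  (forall x y p, vsort x = vsort y -> freefor y x p -> wf p ->
     Lam (Imp (Eq (TVar x) (TVar y)) (Imp p (subst y x p)))) /\
  (forall c x, vsort x = csort c ->
     Lam (Imp (Eq (TConst c) (TConst c)) (Ex x (Eq (TVar x) (TConst c))))) /\
  (forall xs y, size xs = #|A| -> uniq xs -> all (fun x => vsort x == agt) xs ->
     vsort y = agt -> y \notin xs -> Lam (N_form xs y)) /\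
  (forall t p q, tsort t = Some agt -> wf p -> wf q ->
     Lam (Imp (Know t (Imp p q)) (Imp (Know t p) (Know t q)))) /\
  (forall x t p, tsort t = Some agt -> x \notin tvars t -> wf p ->
     Lam (Imp (All x (Know t p)) (Know t (All x p)))) /\
  (forall x y t, tsort t = Some agt ->
     Lam (Imp (Neg (Eq (TVar x) (TVar y))) (Know t (Neg (Eq (TVar x) (TVar y)))))) /\
  (forall p q, Lam (Imp p q) -> Lam p -> Lam q) /\
  (forall t p, tsort t = Some agt -> Lam p -> Lam (Know t p)) /\
  (forall x p q, Lam (Imp p q) -> ~~ free x p -> Lam (Imp p (All x q))).

Definition derives (Lam Gam : form -> Prop) (p : form) : Prop :=
  exists l : seq form, (forall q, List.In q l -> Gam q) /\
    Lam (match l with [::] => p | a :: l' => Imp (bigAnd a l') p end).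

Definition consistent (Lam Gam : form -> Prop) : Prop :=
  forall p, ~ derives Lam Gam (And p (Neg p)).

Definition forall_property (Gam : form -> Prop) : Prop :=
  forall p x, wf p -> exists y : var, vsort y = vsort x /\ Gam (Imp (subst y x p) (All x p)).

End Syntax.

(* Main.v *)
Require Import Defs.
From HB Require Import structures.
From mathcomp Require Import all_boot.
From Stdlib Require List.
Set Implicit Arguments.
Unset Strict Implicit.
Unset Printing Implicit Defensive.

Fixpoint term_ind' {S : signature} (P : term S -> Prop)
  (HV : forall x, P (TVar S x)) (HC : forall c, P (TConst c))
  (HA : forall f ts, List.Forall P ts -> P (TApp f ts)) (t : term S) : P t :=
  match t with
  | TVar x => HV x
  | TConst c => HC c
  | TApp f ts => HA f ts ((fix go (l : seq (term S)) : List.Forall P l :=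
       match l with nil => List.Forall_nil _ | u :: l' => List.Forall_cons _ (term_ind' HV HC HA u) (go l') end) ts)
  end.

Lemma tsort_tsubst {S : signature} (y x : var) (t : term S) :
  vsort y = vsort x -> tsort (tsubst y x t) = tsort t.
Proof.
move=> hs; elim/(@term_ind' S): t => [z|c|f ts IH] //=.
- by case: eqP => [->|]; rewrite /= ?hs.
- suff -> : map (@tsort S) (map (tsubst y x) ts) = map (@tsort S) ts by [].
  rewrite -map_comp; elim: IH => //= u l Hu _ ->; by rewrite Hu.
Qed.

Lemma wf_subst {S : signature} (y x : var) (p : form S) :
  vsort y = vsort x -> wf (subst y x p) = wf p.
Proof.
move=> hs; elim: p => [t1 t2|r ts|a IH|a IHa b IHb|z a IH|t a IH] /=.
- by rewrite !tsort_tsubst.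
- rewrite -map_comp; congr (_ == _); apply: eq_map => u /=; exact: tsort_tsubst.
- done.
- by rewrite IHa IHb.
- by case: eqP => //= _.
- by rewrite tsort_tsubst // IH.
Qed.

Lemma tsubst_notin {S : signature} (z y : var) (t : term S) :
  y \notin tvars t -> tsubst z y t = t.
Proof.
elim/(@term_ind' S): t => [w|c|f ts IH] //=.
- by rewrite inE; case: (w =P y) => // ->; rewrite eqxx.
- move=> H; congr TApp; elim: IH H => //= u l Hu _ IHl.
  rewrite mem_cat negb_or => /andP[h1 h2]; by rewrite Hu // IHl.
Qed.

Lemma subst_notin {S : signature} (z y : var) (p : form S) :
  y \notin vars p -> subst z y p = p.
Proof.
elim: p => [t1 t2|r ts|a IH|a IHa b IHb|w a IH|t a IH] /=.
- by rewrite mem_cat negb_or => /andP[h1 h2]; rewrite !tsubst_notin.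
- move=> H; congr Rel; elim: ts H => //= u l IHl.
  rewrite mem_cat negb_or => /andP[h1 h2]; by rewrite tsubst_notin // IHl.
- by move=> h; rewrite IH.
- by rewrite mem_cat negb_or => /andP[h1 h2]; rewrite IHa // IHb.
- rewrite inE negb_or => /andP[h1 h2]; case: eqP => // _; by rewrite IH.
- by rewrite mem_cat negb_or => /andP[h1 h2]; rewrite tsubst_notin // IH.
Qed.

Lemma tsubst_back {S : signature} (y x : var) (t : term S) :
  y \notin tvars t -> tsubst x y (tsubst y x t) = t.
Proof.
elim/(@term_ind' S): t => [w|c|f ts IH] //=.
- rewrite inE => h; case: eqP => [->|ne] /=; first by rewrite eqxx.
  by case: eqP => // e; rewrite e eqxx in h.
- move=> H; congr TApp; rewrite -map_comp; elim: IH H => //= u l Hu _ IHl.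
  rewrite mem_cat negb_or => /andP[h1 h2]; by rewrite Hu // IHl.
Qed.

Lemma subst_back {S : signature} (y x : var) (p : form S) :
  y != x -> y \notin vars p -> subst x y (subst y x p) = p.
Proof.
move=> yx; elim: p => [t1 t2|r ts|a IH|a IHa b IHb|w a IH|t a IH] /=.
- by rewrite mem_cat negb_or => /andP[h1 h2]; rewrite !tsubst_back.
- move=> H; congr Rel; rewrite -map_comp; elim: ts H => //= u l IHl.
  rewrite mem_cat negb_or => /andP[h1 h2]; by rewrite tsubst_back // IHl.
- by move=> h; rewrite IH.
- by rewrite mem_cat negb_or => /andP[h1 h2]; rewrite IHa // IHb.
- rewrite inE negb_or => /andP[h1 h2]; case: (w =P x) => [->|wx] /=.
  + rewrite eq_sym (negbTE yx) subst_notin //; by rewrite -(eqP (eqxx x)).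
  + case: (w =P y) => [e|_]; first by rewrite e eqxx in h1.
    by rewrite IH.
- by rewrite mem_cat negb_or => /andP[h1 h2]; rewrite tsubst_back // IH.
Qed.
Lemma tvars_tsubst_x {S : signature} (y x : var) (t : term S) :
  y != x -> x \notin tvars (tsubst y x t).
Proof.
move=> yx; elim/(@term_ind' S): t => [w|c|f ts IH] //=.
- case: (w =P x) => [_|wx] /=; rewrite inE; first by rewrite eq_sym.
  by apply/eqP=> e; apply: wx.
- elim: IH => //= u l Hu _ IHl; by rewrite mem_cat negb_or Hu.
Qed.

Lemma free_subst_x {S : signature} (y x : var) (p : form S) :
  y != x -> free x (subst y x p) = false.
Proof.
move=> yx; elim: p => [t1 t2|r ts|a IH|a IHa b IHb|w a IH|t a IH] /=.
- by rewrite (negbTE (tvars_tsubst_x _ yx)) (negbTE (tvars_tsubst_x _ yx)).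
- apply/negbTE; elim: ts => //= u l IHl; by rewrite negb_or IHl (tvars_tsubst_x _ yx).
- done.
- by rewrite IHa IHb.
- case: (w =P x) => [->|_] /=; first by rewrite eqxx.
  by rewrite IH andbF.
- by rewrite (negbTE (tvars_tsubst_x _ yx)) IH.
Qed.

Lemma free_vars {S : signature} (y : var) (p : form S) : free y p -> y \in vars p.
Proof.
elim: p => [t1 t2|r ts|a IH|a IHa b IHb|w a IH|t a IH] /=.
- by rewrite mem_cat.
- elim: ts => //= u l IHl; rewrite mem_cat => /orP[->//|/IHl ->]; by rewrite orbT.
- done.
- by rewrite mem_cat => /orP[/IHa|/IHb] ->; rewrite ?orbT.
- by move=> /andP[_ /IH]; rewrite inE => ->; rewrite orbT.
- by rewrite mem_cat => /orP[->|/IH ->]; rewrite ?orbT.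
Qed.

Lemma freefor_notfree {S : signature} (z y : var) (a : form S) :
  ~~ free y a -> freefor z y a.
Proof.
elim: a => [t1 t2|r ts|a IH|a IHa b IHb|w a IH|t a IH] //=.
- by rewrite negb_or => /andP[/IHa -> /IHb ->].
- case: (w =P y) => [->|wy] //= h.
  by rewrite h /= IH.
- by rewrite negb_or => /andP[_ /IH].
Qed.

Lemma freefor_back {S : signature} (y x : var) (p : form S) :
  y \notin vars p -> freefor x y (subst y x p).
Proof.
elim: p => [t1 t2|r ts|a IH|a IHa b IHb|w a IH|t a IH] //=.
- by rewrite mem_cat negb_or => /andP[/IHa -> /IHb ->].
- rewrite inE negb_or => /andP[h1 h2]; case: (w =P x) => [->|wx] /=.
  + have nf : ~~ free y a by apply/negP => /free_vars; rewrite (negbTE h2).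
    by rewrite nf freefor_notfree ?orbT.
  + rewrite IH //; have -> : (w != x) by apply/eqP.
    by rewrite !orbT.
- by rewrite mem_cat negb_or => /andP[_ /IH].
Qed.

Lemma tvars_tsubst {S : signature} (y x z : var) (t : term S) :
  z \in tvars (tsubst y x t) -> z = y \/ z \in tvars t.
Proof.
elim/(@term_ind' S): t => [w|c|f ts IH] //=.
- case: (w =P x) => _ /=; rewrite inE => /eqP ->; [by left|by right; rewrite ?inE eqxx].
- elim: IH => //= u l Hu _ IHl; rewrite !mem_cat => /orP[/Hu|/IHl] [->|h]; auto;
  by right; rewrite h ?orbT.
Qed.

Lemma vars_subst {S : signature} (y x z : var) (p : form S) :
  z \in vars (subst y x p) -> z = y \/ z \in vars p.
Proof.
elim: p => [t1 t2|r ts|a IH|a IHa b IHb|w a IH|t a IH] //=.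
- by rewrite !mem_cat => /orP[/tvars_tsubst|/tvars_tsubst] [->|h]; auto; right; rewrite h ?orbT.
- elim: ts => //= u l IHl; rewrite !mem_cat => /orP[/tvars_tsubst|/IHl] [->|h]; auto;
  by right; rewrite h ?orbT.
- by rewrite !mem_cat => /orP[/IHa|/IHb] [->|h]; auto; right; rewrite h ?orbT.
- case: (w =P x) => _ /=; rewrite !inE; first by auto.
  by case/orP=> [->|/IH [->|h]]; auto; right; rewrite h ?orbT.
- by rewrite !mem_cat => /orP[/tvars_tsubst|/IH] [->|h]; auto; right; rewrite h ?orbT.
Qed.
Definition hyp {S : signature} (l : seq (form S)) (p : form S) :=
  match l with [::] => p | a :: l' => Imp (bigAnd a l') p end.

Lemma teval_bigAnd {S : signature} v (a : form S) l :
  teval v (bigAnd a l) = teval v a && all (teval v) l.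
Proof. by elim: l a => [|b l IH] a /=; rewrite ?andbT // IH negb_imply negbK. Qed.

Lemma wf_bigAnd {S : signature} (a : form S) l :
  wf (bigAnd a l) = wf a && all (@wf S) l.
Proof. by elim: l a => [|b l IH] a /=; rewrite ?andbT // IH. Qed.

Lemma free_bigAnd {S : signature} y (a : form S) l :
  free y (bigAnd a l) = free y a || has (@free S y) l.
Proof. by elim: l a => [|b l IH] a /=; rewrite ?orbF // IH. Qed.

Lemma teval_hyp {S : signature} v (l : seq (form S)) p :
  teval v (hyp l p) = all (teval v) l ==> teval v p.
Proof. by case: l => [|a l] //=; rewrite teval_bigAnd. Qed.

Lemma wf_hyp {S : signature} (l : seq (form S)) p :
  wf (hyp l p) = all (@wf S) l && wf p.
Proof. by case: l => [|a l] //=; rewrite wf_bigAnd. Qed.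

Lemma prop_cl {S : signature} (Lam : form S -> Prop)
  (Hwf : forall p, Lam p -> wf p) (Htaut : forall p, wf p -> taut p -> Lam p)
  (Hmp : forall p q, Lam (Imp p q) -> Lam p -> Lam q)
  (ps : seq (form S)) (q : form S) :
  (forall v, all (teval v) ps -> teval v q) -> wf q ->
  (forall p, List.In p ps -> Lam p) -> Lam q.
Proof.
move=> Ht wq Hin.
have wps : all (@wf S) ps.
  elim: ps {Ht} Hin => //= a l IH Hin; rewrite Hwf /=; last by apply: Hin; left.
  by apply: IH => p hp; apply: Hin; right.
have LF : Lam (foldr (@Imp S) q ps).
  apply: Htaut.
  - by elim: ps wps {Ht Hin} => //= a l IH /andP[-> /IH].
  - move=> v; move: (Ht v); elim: ps {Ht Hin wps} => //= [-> //|a l IH H].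
    by apply/implyP => ha; apply: IH => hl; apply: H; rewrite ha hl.
elim: ps Hin LF {Ht wps} => //= a l IH Hin LF.
apply: IH => [p hp|]; first by apply: Hin; right.
by apply: Hmp LF _; apply: Hin; left.
Qed.
Lemma all_In {S : signature} v (l : seq (form S)) :
  (forall q, List.In q l -> teval v q) -> all (teval v) l.
Proof. elim: l => //= a l IH H; rewrite H /=; [apply: IH => q hq; apply: H|]; by [right|left]. Qed.

Lemma In_all {S : signature} v (l : seq (form S)) q :
  all (teval v) l -> List.In q l -> teval v q.
Proof. elim: l => //= a l IH /andP[ha hl] [<-//|]; exact: IH. Qed.

Lemma henkin_step {S : signature} {A : finType} (Lam : form S -> Prop) (HL : normal_tml A Lam)
  (Del Del' : form S -> Prop) (y x : var) (p : form S) :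
  consistent Lam Del -> (forall q, Del q -> wf q) -> (forall q, Del q -> y \notin vars q) ->
  y \notin vars p -> y != x -> vsort y = vsort x -> wf p ->
  (forall q, Del' q -> Del q \/ q = Imp (subst y x p) (All x p)) ->
  consistent Lam Del'.
Proof.
move=> Hc Dwf Dy yp yx hs wp Hsub r [l [Hl Hder]].
case: HL => Hwf [Htaut [Hall [_ [_ [_ [_ [_ [_ [_ [_ [Hmp [_ Hgen]]]]]]]]]]]].
set th := Imp (subst y x p) (All x p).
set ph := subst y x p.
have [l' [Hl' Hll']] : exists l', (forall q, List.In q l' -> Del q) /\
    (forall q, List.In q l -> q = th \/ List.In q l').
  elim: l {Hder} Hl => [|a l IH] Hl; first by exists [::].
  have [l' [H1 H2]] := IH (fun q hq => Hl q (or_intror hq)).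
  case: (Hsub a (Hl a (or_introl erefl))) => [Da|->].
  - exists (a :: l'); split; first by move=> q [<-|/H1].
    move=> q [<-|/H2 [->|h]]; [by right; left | by left | by right; right].
  - exists l'; split => // q [<-|/H2]; by [left|].
have wl' : all (@wf S) l'.
  elim: l' Hl' {Hll'} => //= a l' IH H; rewrite Dwf /=; last by apply: H; left.
  by apply: IH => q hq; apply: H; right.
have ny : ~~ has (@free S y) l'.
  elim: l' Hl' {Hll' wl'} => //= a l' IH H; rewrite negb_or IH; last by move=> q hq; apply: H; right.
  by rewrite andbT; apply/negP => /free_vars; apply/negP; apply: Dy; apply: H; left.
set T := Imp (Eq (TVar S x) (TVar S x)) (Eq (TVar S x) (TVar S x)).
set C := bigAnd T l'.
have wC : wf C by rewrite /C wf_bigAnd wl' andbT.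
have wph : wf ph by rewrite /ph wf_subst.
have tC : forall v, teval v C = all (teval v) l' by move=> v; rewrite /C teval_bigAnd /= implybb.
have tl : forall v, all (teval v) l' -> teval v th -> all (teval v) l.
  move=> v h1 h2; apply: all_In => q /Hll' [->//|hq]; exact: In_all h1 hq.
have Pcl := prop_cl Hwf Htaut Hmp.
have S1 : Lam (Imp C ph).
  apply: (Pcl [:: hyp l (And r (Neg r))]); [|by rewrite /= wC wph|by move=> q [<-|]].
  move=> v; rewrite /= teval_hyp tC andbT /= => H; apply/implyP => hC.
  apply/negPn/negP => hph; move: H; rewrite tl //= ?(negbTE hph) //.
  by case: (teval v r).
have S2 : Lam (Imp C (Neg (All x p))).
  apply: (Pcl [:: hyp l (And r (Neg r))]); [|by rewrite /= wC wp|by move=> q [<-|]].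
  move=> v; rewrite /= teval_hyp tC andbT /= => H; apply/implyP => hC.
  apply/negP => hA; move: H; rewrite tl //= ?hA ?implybT //.
  by case: (teval v r).
have S3 : Lam (Imp C (All y ph)).
  by apply: (Hgen y C ph S1); rewrite /C free_bigAnd /= inE (negbTE yx) /=.
have S4 : Lam (Imp (All y ph) p).
  have -> : Lam (Imp (All y ph) p) = Lam (Imp (All y ph) (subst x y ph)) by rewrite /ph subst_back.
  by apply: Hall => //; rewrite /ph freefor_back.
have S5 : Lam (Imp (All y ph) (All x p)).
  apply: (Hgen x _ _ S4) => /=; by rewrite /ph free_subst_x // andbF.
apply: (Hc (All x p)); exists l'; split => //.
apply: (Pcl [:: Imp C (All y ph); Imp (All y ph) (All x p); Imp C (Neg (All x p))]).
- move=> v /=; rewrite teval_hyp tC andbT.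
  by case: (all _ _); case: (v (All y ph)); case: (v (All x p)).
- by have := wf_hyp l' (And (All x p) (Neg (All x p))); rewrite /hyp => ->; rewrite wl' /= wp.
- by move=> q [<-|[<-|[<-|]]].
Qed.
From Stdlib Require Import Lia.
From Stdlib Require Cantor.
Lemma pickle_inj (T : countType) : injective (@pickle T). Proof. exact: pcan_inj (@pickleK T). Qed.
Definition venc (x : var) : bool * nat * bool := (srt_eqb x.1.1 agt, x.1.2, x.2).

Lemma venc_inj : injective venc.
Proof.
move=> [[s1 n1] b1] [[s2 n2] b2] [] /= e -> ->.
by move: e; case: s1; case: s2.
Qed.

Fixpoint tenc {S : signature} (t : term S) : GenTree.tree nat :=
  match t with
  | TVar x => GenTree.Node 0 [:: GenTree.Leaf (pickle (venc x))]
  | TConst c => GenTree.Node 1 [:: GenTree.Leaf (pickle c)]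
  | TApp f ts => GenTree.Node 2 (GenTree.Leaf (pickle f) :: map tenc ts)
  end.

Fixpoint fenc {S : signature} (p : form S) : GenTree.tree nat :=
  match p with
  | Eq t1 t2 => GenTree.Node 3 [:: tenc t1; tenc t2]
  | Rel r ts => GenTree.Node 4 (GenTree.Leaf (pickle r) :: map tenc ts)
  | Neg a => GenTree.Node 5 [:: fenc a]
  | Imp a b => GenTree.Node 6 [:: fenc a; fenc b]
  | All x a => GenTree.Node 7 [:: GenTree.Leaf (pickle (venc x)); fenc a]
  | Know t a => GenTree.Node 8 [:: tenc t; fenc a]
  end.

Lemma tenc_inj {S : signature} : injective (@tenc S).
Proof.
move=> t; elim/(@term_ind' S): t => [x|c|f ts IH] [x'|c'|f' ts'] //=.
- by case=> /pickle_inj/venc_inj ->.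
- by case=> /pickle_inj ->.
- case=> /pickle_inj -> e; congr TApp.
  by elim: IH ts' e => [|u l Hu _ IHl] [|u' l'] //= [] /Hu -> /IHl ->.
Qed.

Lemma tencs_inj {S : signature} : injective (map (@tenc S)).
Proof. apply: inj_map; exact: tenc_inj. Qed.

Lemma fenc_inj {S : signature} : injective (@fenc S).
Proof.
move=> p; elim: p => [t1 t2|r ts|a IH|a IHa b IHb|z a IH|t a IH]
  [t1' t2'|r' ts'|a'|a' b'|z' a'|t' a'] //=.
- by case=> /tenc_inj -> /tenc_inj ->.
- by case=> /pickle_inj -> /tencs_inj ->.
- by case=> /IH ->.
- by case=> /IHa -> /IHb ->.
- by case=> /pickle_inj/venc_inj -> /IH ->.
- by case=> /tenc_inj -> /IH ->.
Qed.

Definition mx {S : signature} (p : form S) (x : var) : nat :=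
  foldr maxn 0 (map (fun z : var => z.1.2) (x :: vars p)).

Lemma mx_ge {S : signature} (p : form S) x z : z \in x :: vars p -> z.1.2 <= mx p x.
Proof.
rewrite /mx; elim: (x :: vars p) => //= a s IH; rewrite inE => /orP[/eqP ->|/IH h].
- exact: leq_maxl.
- exact: leq_trans h (leq_maxr _ _).
Qed.

Definition idx {S : signature} (p : form S) (x : var) : nat :=
  Cantor.to_nat ((pickle (fenc p, venc x)).+1, mx p x).

Lemma idx_gt {S : signature} (p : form S) x : mx p x < idx p x.
Proof.
have := Cantor.to_nat_non_decreasing (pickle (fenc p, venc x)).+1 (mx p x).
rewrite /idx => h; apply/leP; lia.
Qed.

Lemma idx_inj {S : signature} (p p' : form S) x x' : idx p x = idx p' x' -> p = p' /\ x = x'.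
Proof.
rewrite /idx => /(f_equal Cantor.of_nat); rewrite !Cantor.cancel_of_to.
case=> e _; move/pickle_inj: e => e.
split; [exact: fenc_inj (f_equal fst e) | exact: venc_inj (f_equal snd e)].
Qed.
From Stdlib Require Import Classical.

Definition yv {S : signature} (p : form S) (x : var) : var := (vsort x, idx p x, true).
Definition th {S : signature} (p : form S) (x : var) : form S :=
  Imp (subst (yv p x) x p) (All x p).

Lemma th_vars {S : signature} (p : form S) x z : z \in vars (th p x) -> z.1.2 <= idx p x.
Proof.
rewrite /= mem_cat => /orP[/vars_subst [->//|h]|h].
- have h' : z \in x :: vars p by rewrite inE h orbT.
  exact: ltnW (leq_ltn_trans (mx_ge h') (idx_gt p x)).
- exact: ltnW (leq_ltn_trans (mx_ge h) (idx_gt p x)).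
Qed.
Definition Dl {S : signature} (Gam : form S -> Prop) (n : nat) (q : form S) : Prop :=
  Gam q \/ exists p x, wf p /\ idx p x < n /\ q = th p x.

Lemma consistent_sub {S : signature} (Lam D D' : form S -> Prop) :
  consistent Lam D -> (forall q, D' q -> D q) -> consistent Lam D'.
Proof. move=> Hc Hs r [l [Hl H]]; apply: (Hc r); exists l; split => // q /Hl; exact: Hs. Qed.

Lemma Dl_cons {S : signature} (A : finType) (Lam Gam : form S -> Prop) :
  normal_tml A Lam ->
  (forall p, Gam p -> wf p && inL p) ->
  consistent Lam Gam -> forall n, consistent Lam (Dl Gam n).
Proof.
move=> HL HG Hc; elim=> [|n IH].
  by apply: consistent_sub Hc _ => q [//|[p [x [_ [//]]]]].
have Dwf : forall q, Dl Gam n q -> wf q.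
  move=> q [/HG/andP[]//|[p [x [wp [_ ->]]]]].
  by rewrite /= wf_subst ?wp.
case: (classic (exists (p0 : form S) (x0 : var), wf p0 /\ idx p0 x0 = n)) => [[p0 [x0 [wp0 e0]]]|hn].
- apply: (@henkin_step S A Lam HL (Dl Gam n) (Dl Gam n.+1) (yv p0 x0) x0 p0 IH Dwf) => //.
  + move=> q [/HG/andP[_ hq]|[p [x [wp [lt ->]]]]].
    * apply/negP => hy; move/allP: hq => /(_ _ hy) /=; by [].
    * apply/negP => /th_vars /= h; rewrite e0 in h.
      by move: (leq_ltn_trans h lt); rewrite ltnn.
  + apply/negP => hy; have := mx_ge (x:=x0) (z := yv p0 x0) (p:=p0).
    rewrite inE hy orbT => /(_ isT) /= h.
    by move: (leq_ltn_trans h (idx_gt p0 x0)); rewrite ltnn.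
  + apply/negP => /eqP hy; have := mx_ge (x:=x0) (z := x0) (p:=p0).
    have e : x0.1.2 = idx p0 x0 by rewrite -{1}hy.
    rewrite inE eqxx e => /(_ isT) /= h.
    by move: (leq_ltn_trans h (idx_gt p0 x0)); rewrite ltnn.
  + move=> q [hq|[p [x [wp [lt ->]]]]]; first by left; left.
    rewrite ltnS leq_eqVlt in lt; case/orP: lt => [/eqP e|lt].
    * by right; rewrite -e0 in e; case: (idx_inj e) => -> ->.
    * by left; right; exists p, x.
- apply: consistent_sub IH _ => q [hq|[p [x [wp [lt ->]]]]]; first by left.
  right; exists p, x; split => //; split => //.
  rewrite ltnS leq_eqVlt in lt; case/orP: lt => [/eqP e|//].
  by case: hn; exists p, x.
Qed.

Theorem lemma7p8 (S : signature) (A : finType) (Lam Gam : form S -> Prop) :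
  0 < #|A| ->
  normal_tml A Lam ->
  (forall p, Gam p -> wf p && inL p) ->
  consistent Lam Gam ->
  exists Gp : form S -> Prop,
    (forall p, Gp p -> wf p) /\
    consistent Lam Gp /\
    forall_property Gp /\
    (forall p, Gam p -> Gp p).
Proof.
move=> _ HL HG Hc.
exists (fun q => Gam q \/ exists p x, wf p /\ q = th p x).
split; last split; last split.
- move=> q [/HG/andP[]//|[p [x [wp ->]]]].
  by rewrite /= wf_subst ?wp.
- move=> r [l [Hl H]].
  have [N HN] : exists N, forall q, List.In q l -> Dl Gam N q.
    elim: l Hl {H} => [|a l IH] Hl; first by exists 0.
    have [N HN] := IH (fun q hq => Hl q (or_intror hq)).
    case: (Hl a (or_introl erefl)) => [ha|[p [x [wp ea]]]].
    + exists N => q [<-|/HN]; first by left.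
      done.
    + exists (maxn N (idx p x).+1) => q [<-|/HN [hq|[p' [x' [wp' [lt ->]]]]]].
      * right; exists p, x; split => //; split => //; exact: leq_trans (leq_maxr _ _).
      * by left.
      * right; exists p', x'; split => //; split => //; exact: leq_trans lt (leq_maxl _ _).
  by apply: (@Dl_cons S A Lam Gam HL HG Hc N r); exists l.
- move=> p x wp; exists (yv p x); split => //; right; by exists p, x.
- by move=> p hp; left.
Qed.
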